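(* Let $Q$ be a finite quiver of diameter $1$. The assignment $\sigma\mapsto(Q^+_\sigma,Q^-_\sigma)$ restricts to a bijection $P$ from the set $\sigma(Q)^{\mathrm a}$ of acyclic labelings of $Q$ onto the set $\mathrm R(F(Q))$ of Reedy structures on $F(Q)$.
   Context: $Q$ has diameter $1$ if no vertex is both the target of an arrow and the source of an arrow. $F(Q)$ is the free category on $Q$. A labeling is a map $\sigma\colon Q_1\to\{+,-\}$. It is acyclic if the orientation of the underlying undirected multigraph obtained by reversing the arrows labelled $-$ has no directed cycle. $Q^+_\sigma$ and $Q^-_\sigma$ are the wide subcategories of $F(Q)$ generated by the arrows labelled $+$ and $-$ respectively. A Reedy structure on a small category $J$ is a pair $(J^+,J^-)$ of wide subcategories for which there exists a degree function $\deg\colon\mathrm{ob}J\to\mathbb N$ such that: - non-identity morphisms of $J^+$ strictly raise degree; - non-identity morphisms of $J^-$ strictly lower degree; - every morphism factors uniquely as a morphism of $J^-$ followed by a morphism of $J^+$. The degree function itself is not part of the data. *)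

(* Defs.v *)
From mathcomp Require Import all_boot.
Set Implicit Arguments. Unset Strict Implicit. Unset Printing Implicit Defensive.

Section Quiver.
Variables (V A : finType) (src tgt : A -> V).

Definition diameter1 : Prop :=
  forall v : V, ~ ((exists a : A, tgt a = v) /\ (exists b : A, src b = v)).

(* The free category F(Q): objects are vertices, morphisms x -> y are paths
   [a1; ...; an] with src a1 = x, tgt ai = src a(i+1), tgt an = y;
   the identity at x is the empty path; composition is concatenation
   (diagrammatic order: (x,y,p) then (y,z,q) gives (x,z,p++q)). *)
Fixpoint is_path (x : V) (p : seq A) (y : V) : bool :=
  match p with
  | [::] => x == y
  | a :: p' => (src a == x) && is_path (tgt a) p' y
  end.

Definition Mor := (V * V * seq A)%type.
Definition valid_mor (m : Mor) : bool := is_path m.1.1 m.2 m.1.2.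

Definition wide_subcat (S : Mor -> Prop) : Prop :=
  [/\ (forall m, S m -> valid_mor m),
      (forall x : V, S (x, x, [::])) &
      (forall (x y z : V) (p q : seq A), S (x, y, p) -> S (y, z, q) -> S (x, z, p ++ q))].

Definition generated_subcat (G : A -> bool) : Mor -> Prop :=
  fun m => forall S : Mor -> Prop, wide_subcat S ->
    (forall a, G a -> S (src a, tgt a, [:: a])) -> S m.

(* labelings sigma : Q_1 -> {+,-}, with true = + and false = - *)
Definition labeling := {ffun A -> bool}.

(* orientation after reversing the arrows labelled - *)
Definition otail (s : labeling) (a : A) : V := if s a then src a else tgt a.
Definition ohead (s : labeling) (a : A) : V := if s a then tgt a else src a.

Definition has_directed_cycle (s : labeling) : Prop :=
  exists (a : A) (w : seq A),
    path (fun b c => ohead s b == otail s c) a w /\ ohead s (last a w) = otail s a.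

Definition acyclic (s : labeling) : Prop := ~ has_directed_cycle s.

Definition Qplus (s : labeling) : Mor -> Prop := generated_subcat (fun a => s a).
Definition Qminus (s : labeling) : Mor -> Prop := generated_subcat (fun a => ~~ s a).

(* Reedy structure (J+, J-) on F(Q); non-identity morphisms of F(Q) are exactly
   those with nonempty path. *)
Definition is_reedy (Jp Jm : Mor -> Prop) : Prop :=
  wide_subcat Jp /\ wide_subcat Jm /\
  exists deg : V -> nat,
    [/\ (forall x y p, Jp (x, y, p) -> p <> [::] -> deg x < deg y),
        (forall x y p, Jm (x, y, p) -> p <> [::] -> deg y < deg x) &
        (forall x y p, valid_mor (x, y, p) ->
           exists! t : V * seq A * seq A,
             [/\ Jm (x, t.1.1, t.1.2), Jp (t.1.1, y, t.2) & t.1.2 ++ t.2 = p])].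

End Quiver.

(* Main.v *)
From Stdlib Require Import FunctionalExtensionality PropExtensionality ClassicalDescription.
Require Import Defs.
From mathcomp Require Import all_boot.
Set Implicit Arguments. Unset Strict Implicit. Unset Printing Implicit Defensive.

Definition Pm {V A : finType} (src tgt : A -> V) (G : A -> bool) (m : Mor V A) : Prop :=
  let: (x, y, p) := m in
  match p with
  | [::] => x = y
  | [:: a] => [/\ G a, x = src a & y = tgt a]
  | _ => False
  end.

Lemma wide_Pm {V A : finType} (src tgt : A -> V) (G : A -> bool) :
  diameter1 src tgt -> wide_subcat src tgt (Pm src tgt G).
Proof.
move=> D; split.
- move=> [[x y] [|a [|b p]]] //=.
  + by move=> ->; rewrite /valid_mor /=.
  + by move=> [_ -> ->]; rewrite /valid_mor /= !eqxx.
- by [].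
- move=> x y z [|a [|a' p]] [|b [|b' q]] //=.
  + by move=> -> ->.
  + by move=> ->.
  + by move=> [? ? ->] ->.
  + move=> [_ _ Ey] [_ Ey' _]; exfalso; apply: (D y); split.
    * by exists a.
    * by exists b.
Qed.

Lemma gen_eq {V A : finType} (src tgt : A -> V) (G : A -> bool) :
  diameter1 src tgt -> generated_subcat src tgt G = Pm src tgt G.
Proof.
move=> D; apply: functional_extensionality => m; apply: propositional_extensionality.
split.
- move=> H; apply: H; first exact: wide_Pm.
  by move=> a Ga /=.
- move=> HP S [Sv Sid Sc] Sg.
  case: m HP => [[x y] [|a [|b p]]] //=.
  + by move=> ->.
  + by move=> [Ga -> ->]; apply: Sg.
Qed.

Definition arel {V A : finType} (src tgt : A -> V) (s : labeling A) :=
  (fun b c => Defs.ohead src tgt s b == otail src tgt s c).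

Lemma deg_acyclic {V A : finType} (src tgt : A -> V) (s : labeling A) (deg : V -> nat) :
  (forall a, deg (otail src tgt s a) < deg (Defs.ohead src tgt s a)) -> acyclic src tgt s.
Proof.
move=> Hd [a [w [P E]]].
have key : forall w a, path (arel src tgt s) a w ->
   deg (otail src tgt s a) < deg (Defs.ohead src tgt s (last a w)).
  elim=> [|b w' IH] a' /=; first by [].
  move=> /andP [/eqP e Pw]; apply: ltn_trans (IH _ Pw).
  by rewrite -e.
by move: (key w a P); rewrite E ltnn.
Qed.

Definition erel {V A : finType} (src tgt : A -> V) (s : labeling A) : rel V :=
  fun u v => [exists a, (otail src tgt s a == u) && (Defs.ohead src tgt s a == v)].

Definition adeg {V A : finType} (src tgt : A -> V) (s : labeling A) (v : V) : nat :=
  #|[set u | [exists u', erel src tgt s u u' && connect (erel src tgt s) u' v]]|.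

Lemma vpath_apath {V A : finType} (src tgt : A -> V) (s : labeling A) :
  forall p x, path (erel src tgt s) x p -> forall a, Defs.ohead src tgt s a = x ->
   exists w, path (arel src tgt s) a w /\ Defs.ohead src tgt s (last a w) = last x p.
Proof.
elim=> [|y p IH] x /=.
  by move=> _ a <-; exists [::].
move=> /andP [/existsP [b /andP [/eqP Hb1 /eqP Hb2]] Pp] a Ha.
have [w [Pw Ew]] := IH y Pp b Hb2.
exists (b :: w); split => //=.
by rewrite /arel Ha Hb1 eqxx.
Qed.

Lemma adeg_lt {V A : finType} (src tgt : A -> V) (s : labeling A) :
  acyclic src tgt s -> forall a,
  adeg src tgt s (otail src tgt s a) < adeg src tgt s (Defs.ohead src tgt s a).
Proof.
move=> Ac a; rewrite /adeg; apply: proper_card; apply/properP; split.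
- apply/subsetP => w; rewrite !inE => /existsP [w' /andP [e c]].
  apply/existsP; exists w'; rewrite e /=.
  apply: connect_trans c (connect1 _).
  by apply/existsP; exists a; rewrite !eqxx.
- exists (otail src tgt s a).
  + rewrite inE; apply/existsP; exists (Defs.ohead src tgt s a).
    rewrite connect0 andbT; by apply/existsP; exists a; rewrite !eqxx.
  + rewrite inE; apply/negP => /existsP [u' /andP [/existsP [b /andP [/eqP Hb1 /eqP Hb2]] c]].
    move/connectP: c => [p Pp Ep].
    have [w [Pw Ew]] := vpath_apath Pp Hb2.
    apply: Ac; exists b, w; split => //.
    by rewrite Ew -Ep Hb1.
Qed.

Lemma valid_short {V A : finType} (src tgt : A -> V) :
  diameter1 src tgt -> forall x y p, valid_mor src tgt (x, y, p) ->
  Pm src tgt (fun _ => true) (x, y, p).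
Proof.
move=> D x y [|a [|b p]]; rewrite /valid_mor /=.
- by move/eqP.
- by move=> /andP [/eqP -> /eqP ->].
- move=> /andP [_ /andP [/eqP e _]]; exfalso; apply: (D (tgt a)); split.
  + by exists a.
  + by exists b.
Qed.

Theorem mainTheorem5 (V A : finType) (src tgt : A -> V) :
  diameter1 src tgt ->
  [/\ (forall s : labeling A, acyclic src tgt s ->
         is_reedy src tgt (Qplus src tgt s) (Qminus src tgt s)),
      (forall s t : labeling A, acyclic src tgt s -> acyclic src tgt t ->
         (Qplus src tgt s, Qminus src tgt s) = (Qplus src tgt t, Qminus src tgt t) ->
         s = t) &
      (forall Jp Jm : Mor V A -> Prop, is_reedy src tgt Jp Jm ->
         exists s : labeling A, acyclic src tgt s /\
           (Qplus src tgt s, Qminus src tgt s) = (Jp, Jm))].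
Proof.
move=> D; split.
- move=> s Ac; rewrite /Qplus /Qminus !gen_eq //.
  split; first exact: wide_Pm.
  split; first exact: wide_Pm.
  exists (adeg src tgt s); split.
  + move=> x y [|a [|b p]] //= [sa -> ->] _.
    by have := adeg_lt Ac a; rewrite /otail /Defs.ohead sa.
  + move=> x y [|a [|b p]] //= [sa -> ->] _.
    by have := adeg_lt Ac a; rewrite /otail /Defs.ohead (negbTE sa).
  + move=> x y p Hv; have := valid_short D Hv.
    case: p Hv => [|a [|b p]] //= _.
    * move=> <-; exists (x, [::], [::]); split => //.
      move=> [[z p1] p2] /= [H1 H2 H3].
      by case: p1 p2 H1 H2 H3 => [|? ?] [|? ?] //= -> .
    * move=> [_ -> ->]; case sa: (s a).
      -- exists (src a, [::], [:: a]); split => //.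
         move=> [[z p1] p2] /= [H1 H2 H3].
         case: p1 H1 H3 => [|b [|c p1]] //=.
         ++ by move=> <- ->.
         ++ move=> [Hb _ _] [e _]; subst b; by rewrite (negbTE Hb) in sa.
      -- exists (tgt a, [:: a], [::]); split => /=; first by split => //; rewrite sa.
         move=> [[z p1] p2] /= [H1 H2 H3].
         case: p1 H1 H3 => [|b [|c p1]] //=.
         ++ by move=> _ e; move: H2; rewrite e /= sa => -[].
         ++ by case: p2 H2 => //= -> _ [->].
- move=> s t _ _ [Ep _]; rewrite /Qplus !gen_eq // in Ep.
  apply/ffunP => a.
  have := f_equal (fun f => f (src a, tgt a, [:: a])) Ep => /= E.
  case sa: (s a); case ta: (t a) => //.
  + have : [/\ s a, src a = src a & tgt a = tgt a] by rewrite sa.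
    by rewrite E ta => -[].
  + have : [/\ t a, src a = src a & tgt a = tgt a] by rewrite ta.
    by rewrite -E sa => -[].
- move=> Jp Jm [[Jpv Jpid Jpc] [[Jmv Jmid Jmc] [deg [Hp Hm Hf]]]].
  pose s : labeling A := [ffun a => if excluded_middle_informative (Jp (src a, tgt a, [:: a])) then true else false].
  have sE : forall a, s a = true <-> Jp (src a, tgt a, [:: a]).
    by move=> a; rewrite ffunE; case: excluded_middle_informative.
  have va : forall a, valid_mor src tgt (src a, tgt a, [:: a]).
    by move=> a; rewrite /valid_mor /= !eqxx.
  have JpE : Jp = Pm src tgt (fun a => s a).
    apply: functional_extensionality => -[[x y] p]; apply: propositional_extensionality.
    split.
    - move=> H; have := valid_short D (Jpv _ H).
      case: p H => [|a [|b p]] //= H.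
      by move=> [_ ex ey]; subst x y; split => //; apply/sE.
    - case: p => [|a [|b p]] //=.
      + by move=> ->; apply: Jpid.
      + by move=> [sa -> ->]; apply/sE.
  have JmE : Jm = Pm src tgt (fun a => ~~ s a).
    apply: functional_extensionality => -[[x y] p]; apply: propositional_extensionality.
    split.
    - move=> H; have := valid_short D (Jmv _ H).
      case: p H => [|a [|b p]] //= H.
      move=> [_ ex ey]; subst x y; split => //.
      apply/negP => /sE HJp.
      have [t [_ Hu]] := Hf _ _ _ (va a).
      have e1 := Hu (src a, [::], [:: a]) (And3 (Jmid _) HJp erefl).
      have e2 := Hu (tgt a, [:: a], [::]) (And3 H (Jpid _) erefl).
      by rewrite e1 in e2; case: e2.
    - case: p => [|a [|b p]] //=.
      + by move=> ->; apply: Jmid.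
      + move=> [nsa -> ->].
        have [[[z p1] p2] [[H1 H2 H3] _]] := Hf _ _ _ (va a).
        move: H1 H2 H3 => /=.
        case: p1 => [|b [|c p1]] //=.
        * move=> H1 H2 e; subst p2.
          have := valid_short D (Jmv _ H1) => /= ez; subst z.
          by move: nsa => /negP; case; apply/sE.
        * case: p2 => //= H1 H2 [e]; subst b.
          by have := valid_short D (Jpv _ H2) => /= ez; subst z.
  exists s; split.
  + apply: (@deg_acyclic _ _ src tgt s deg) => a.
    rewrite /otail /Defs.ohead; case sa: (s a).
    * apply: (Hp _ _ [:: a]) => //; rewrite JpE /=; by split.
    * apply: (Hm _ _ [:: a]) => //; rewrite JmE /=; by rewrite sa.
  + by rewrite /Qplus /Qminus !gen_eq // JpE JmE.
Qed.
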